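(* Consider the Hilbert-style system $\mathsf{Sup}$ over the language $\mathcal{L}$ described in the context, consisting of all classical propositional tautologies (instantiated with formulas of $\mathcal{L}$), Modus Ponens, the axiom schemata $\mathbf{ID}$, $\mathbf{ST}$, $\mathbf{SH}$, $\mathbf{LL+}$ and the rules $\mathbf{RCK}$ and $\mathbf{S5_F}$. Then, for all propositional formulas $\varphi,\psi,\chi,\varphi_1,\varphi_2$: (i) (RW) if $\vdash \varphi_1\to\varphi_2$ then $\vdash (\psi\rightsquigarrow\varphi_1)\to(\psi\rightsquigarrow\varphi_2)$; (ii) (LLE) if $\vdash \varphi\leftrightarrow\psi$ then $\vdash (\varphi\rightsquigarrow\chi)\leftrightarrow(\psi\rightsquigarrow\chi)$; (iii) (AND) $\vdash ((\varphi\rightsquigarrow\psi)\land(\varphi\rightsquigarrow\chi))\to(\varphi\rightsquigarrow(\psi\land\chi))$; (iv) (CUT) $\vdash ((\varphi\rightsquigarrow\psi)\land((\varphi\land\psi)\rightsquigarrow\chi))\to(\varphi\rightsquigarrow\chi)$; (v) (OR) $\vdash ((\varphi\rightsquigarrow\psi)\land(\chi\rightsquigarrow\psi))\to((\varphi\lor\chi)\rightsquigarrow\psi)$. Here $\vdash$ denotes derivability in $\mathsf{Sup}$.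
   Context: Fix a countable set of propositional variables. Propositional formulas are given by $\varphi ::= \bot \mid p \mid \varphi\land\varphi\mid\varphi\lor\varphi\mid\varphi\to\varphi\mid\varphi\leftrightarrow\varphi\mid\neg\varphi$. The language $\mathcal{L}$ consists of formulas $\alpha ::= \varphi \mid \varphi\rightsquigarrow\varphi \mid B(\alpha)\mid \alpha*\alpha\mid\neg\alpha$ ($*\in\{\land,\lor,\to,\leftrightarrow\}$), where $\varphi$ ranges over propositional formulas; so $\rightsquigarrow$ (support) is only applied to two propositional formulas. In the axioms and rules below $\varphi,\psi,\chi,\varphi_i,\psi_i$ range over propositional formulas, and rule applications must produce formulas of $\mathcal{L}$. Axioms: $\mathbf{ID}$: $\varphi\rightsquigarrow\varphi$; $\mathbf{ST}$: $(\varphi\rightsquigarrow\bot)\to\neg\varphi$; $\mathbf{SH}$: $((\psi\land\chi)\rightsquigarrow\varphi)\to(\psi\rightsquigarrow(\chi\to\varphi))$; $\mathbf{LL+}$: $(\neg(\varphi\leftrightarrow\psi)\rightsquigarrow\bot)\to((\varphi\rightsquigarrow\chi)\leftrightarrow(\psi\rightsquigarrow\chi))$. Rule $\mathbf{RCK}$: from $(\varphi_1\land\dots\land\varphi_n)\to\varphi_{n+1}$ infer $((\psi\rightsquigarrow\varphi_1)\land\dots\land(\psi\rightsquigarrow\varphi_n))\to(\psi\rightsquigarrow\varphi_{n+1})$. Rule $\mathbf{S5_F}$: from $(\ell_1\land\dots\land\ell_n)\to\chi$ infer $(\ell_1\land\dots\land\ell_n)\to(\neg\chi\rightsquigarrow\bot)$,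 where each $\ell_j$ is either $\varphi_j\rightsquigarrow\psi_j$ or $\neg(\varphi_j\rightsquigarrow\psi_j)$ and $\chi$ is propositional. *)

(* Defs.v *)
From Stdlib Require Import List.
Import ListNotations.

Inductive pform : Type :=
| PBot : pform
| PVar : nat -> pform
| PAnd : pform -> pform -> pform
| POr  : pform -> pform -> pform
| PImp : pform -> pform -> pform
| PIff : pform -> pform -> pform
| PNeg : pform -> pform.

(* The language L.  Propositional formulas are embedded via [emb] below, so
   that the boolean connectives of L and of propositional formulas coincide. *)
Inductive lform : Type :=
| LBot : lform
| LVar : nat -> lform
| LSup : pform -> pform -> lform          (* phi ~> psi, phi psi propositional *)
| LB   : lform -> lform
| LAnd : lform -> lform -> lform
| LOr  : lform -> lform -> lform
| LImp : lform -> lform -> lform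
| LIff : lform -> lform -> lform
| LNeg : lform -> lform.

Fixpoint emb (p : pform) : lform :=
  match p with
  | PBot => LBot
  | PVar n => LVar n
  | PAnd a b => LAnd (emb a) (emb b)
  | POr a b => LOr (emb a) (emb b)
  | PImp a b => LImp (emb a) (emb b)
  | PIff a b => LIff (emb a) (emb b)
  | PNeg a => LNeg (emb a)
  end.

(* Classical valuations: the atoms of L (w.r.t. the boolean connectives) are
   propositional variables, support formulas and B-formulas. *)
Record valuation : Type := {
  v_var : nat -> bool;
  v_sup : pform -> pform -> bool;
  v_B   : lform -> bool }.

Fixpoint leval (v : valuation) (a : lform) : bool :=
  match a with
  | LBot => false
  | LVar n => v_var v n
  | LSup p q => v_sup v p q
  | LB b => v_B v b
  | LAnd x y => leval v x && leval v y
  | LOr x y => leval v x || leval v y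
  | LImp x y => implb (leval v x) (leval v y)
  | LIff x y => Bool.eqb (leval v x) (leval v y)
  | LNeg x => negb (leval v x)
  end.

Definition tautology (a : lform) : Prop := forall v, leval v a = true.

Fixpoint bigand (x : lform) (xs : list lform) : lform :=
  match xs with
  | [] => x
  | y :: ys => LAnd x (bigand y ys)
  end.

Definition literal (l : bool * pform * pform) : lform :=
  match l with
  | (true, p, q) => LSup p q
  | (false, p, q) => LNeg (LSup p q)
  end.

Inductive prov : lform -> Prop :=
| P_taut : forall a, tautology a -> prov a
| P_MP : forall a b, prov (LImp a b) -> prov a -> prov b
| P_ID : forall p, prov (LSup p p)
| P_ST : forall p, prov (LImp (LSup p PBot) (LNeg (emb p)))
| P_SH : forall p q c,
    prov (LImp (LSup (PAnd q c) p) (LSup q (PImp c p)))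
| P_LLp : forall p q c,
    prov (LImp (LSup (PNeg (PIff p q)) PBot) (LIff (LSup p c) (LSup q c)))
| P_RCK : forall (psi p1 pn1 : pform) (ps : list pform),
    prov (LImp (bigand (emb p1) (map emb ps)) (emb pn1)) ->
    prov (LImp (bigand (LSup psi p1) (map (LSup psi) ps)) (LSup psi pn1))
| P_S5F : forall (l1 : bool * pform * pform) (ls : list (bool * pform * pform))
                 (chi : pform),
    prov (LImp (bigand (literal l1) (map literal ls)) (emb chi)) ->
    prov (LImp (bigand (literal l1) (map literal ls)) (LSup (PNeg chi) PBot)).

(* Main.v *)
Require Import Defs.
From Stdlib Require Import List Bool.
Import ListNotations.

Ltac taut_solve :=
  intro; simpl;
  repeat match goal with
         | |- context [leval ?v ?x] => destruct (leval v x)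
         | |- context [v_sup ?v ?x ?y] => destruct (v_sup v x y)
         end; reflexivity.

Lemma tmp (a b : lform) : tautology (LImp a b) -> prov a -> prov b.
Proof. intros H Ha. eapply P_MP; [apply P_taut; exact H| exact Ha]. Qed.

Lemma andI a b : prov a -> prov b -> prov (LAnd a b).
Proof.
  intros Ha Hb. eapply P_MP; [|exact Hb]. eapply P_MP; [|exact Ha].
  apply P_taut. taut_solve.
Qed.

Lemma LLE p q c : prov (emb (PIff p q)) -> prov (LIff (LSup p c) (LSup q c)).
Proof.
  intro H.
  assert (H1 : prov (LImp (bigand (literal (true, p, p)) (map literal [])) (emb (PIff p q)))).
  { simpl. eapply tmp; [|exact H]. taut_solve. }
  apply P_S5F in H1. simpl in H1.
  eapply P_MP; [apply P_LLp|]. eapply P_MP; [exact H1| apply P_ID].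
Qed.

Lemma ANDr p q c : prov (LImp (LAnd (LSup p q) (LSup p c)) (LSup p (PAnd q c))).
Proof.
  apply (P_RCK p q (PAnd q c) [c]). simpl. apply P_taut. taut_solve.
Qed.

Theorem theorem1 :
  (forall psi p1 p2 : pform,
      prov (emb (PImp p1 p2)) ->
      prov (LImp (LSup psi p1) (LSup psi p2))) /\
  (forall p q c : pform,
      prov (emb (PIff p q)) ->
      prov (LIff (LSup p c) (LSup q c))) /\
  (forall p q c : pform,
      prov (LImp (LAnd (LSup p q) (LSup p c)) (LSup p (PAnd q c)))) /\
  (forall p q c : pform,
      prov (LImp (LAnd (LSup p q) (LSup (PAnd p q) c)) (LSup p c))) /\
  (forall p q c : pform,
      prov (LImp (LAnd (LSup p q) (LSup c q)) (LSup (POr p c) q))).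
Proof.
  split; [|split; [|split; [|split]]].
  - intros psi p1 p2 H. apply (P_RCK psi p1 p2 []). exact H.
  - exact LLE.
  - exact ANDr.
  - intros p q c.
    pose proof (P_SH c p q) as H1.
    pose proof (P_RCK p q c [PImp q c]) as H2. simpl in H2.
    assert (H3 : prov (LImp (LAnd (emb q) (LImp (emb q) (emb c))) (emb c)))
      by (apply P_taut; taut_solve).
    specialize (H2 H3).
    eapply tmp; [|exact (andI _ _ H1 H2)]. taut_solve.
  - intros p q c.
    assert (E1 : prov (emb (PIff p (PAnd (POr p c) p)))) by (apply P_taut; taut_solve).
    assert (E2 : prov (emb (PIff c (PAnd (POr p c) c)))) by (apply P_taut; taut_solve).
    pose proof (LLE _ _ q E1) as L1.
    pose proof (LLE _ _ q E2) as L2.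
    pose proof (P_SH q (POr p c) p) as S1.
    pose proof (P_SH q (POr p c) c) as S2.
    pose proof (P_RCK (POr p c) (PImp p q) q [PImp c q; POr p c]) as R. simpl in R.
    assert (T : prov (LImp (LAnd (LImp (emb p) (emb q))
                  (LAnd (LImp (emb c) (emb q)) (LOr (emb p) (emb c)))) (emb q)))
      by (apply P_taut; taut_solve).
    specialize (R T).
    pose proof (P_ID (POr p c)) as I.
    eapply tmp; [|exact (andI _ _ L1 (andI _ _ L2 (andI _ _ S1 (andI _ _ S2 (andI _ _ R I)))))].
    taut_solve.
Qed.
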